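(* Let $S \in \mathbb{Z}^{m\times m}$ be nonsingular, $F \in \mathbb{Z}^{n\times m}$, and let $H\in\mathbb{Z}^{n\times n}$ be the Hermite basis of $\mathcal{R}(S,F)$. Let $n = n_1+n_2$ with $n_1,n_2\ge 0$, write $H = \begin{bmatrix} \bar H_1 & H_{12} \\ 0 & \bar H_2\end{bmatrix}$ with $\bar H_1 \in \mathbb{Z}^{n_1\times n_1}$, and set $H_1 = \mathrm{diag}(\bar H_1, I_{n_2})$, $H_2 = \begin{bmatrix} I_{n_1} & H_{12}\\ 0 & \bar H_2\end{bmatrix}$. Let $A$ be the last $n_2$ rows of $F$ and let $T\in\mathbb{Z}^{m\times m}$ be the Hermite basis of $\begin{bmatrix} S\\ A\end{bmatrix}$. Then: (1) $H_2$ is the Hermite basis of $\mathcal{R}(S, H_1F)$; (2) the Hermite basis of $\begin{bmatrix} S \\ H_1F\end{bmatrix}$ is equal to $T$.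
   Context: For an integer matrix $A$, $\mathcal{L}(A)$ denotes the lattice of all $\mathbb{Z}$-linear combinations of the rows of $A$. For $M \in \mathbb{Z}^{\ell \times m}$ of full column rank and $F \in \mathbb{Z}^{n \times m}$, the integer relations lattice is $\mathcal{R}(M,F) := \{p \in \mathbb{Z}^{1\times n} : pF \in \mathcal{L}(M)\}$; its Hermite basis is the unique nonsingular $H\in\mathbb{Z}^{n\times n}$ in Hermite form with $\mathcal{L}(H)=\mathcal{R}(M,F)$. A nonsingular square integer matrix is in Hermite form if it is upper triangular with positive diagonal entries $h_j$ and each entry above the diagonal in column $j$ lies in $[0,h_j)$. The Hermite basis of a full column rank integer matrix $B$ with $m$ columns is the unique $m\times m$ matrix in Hermite form whose row lattice equals $\mathcal{L}(B)$. *)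

(* Defs.v *)
From mathcomp Require Import all_boot all_order all_algebra.
Set Implicit Arguments. Unset Strict Implicit. Unset Printing Implicit Defensive.
Import Order.TTheory GRing.Theory Num.Theory.
Local Open Scope ring_scope.

Definition lattice (r c : nat) (A : 'M[int]_(r, c)) (v : 'rV[int]_c) : Prop :=
  exists x : 'rV[int]_r, v = x *m A.

Definition relations (l m n : nat) (M : 'M[int]_(l, m)) (F : 'M[int]_(n, m))
  (p : 'rV[int]_n) : Prop := lattice M (p *m F).

Definition hermite_form (n : nat) (H : 'M[int]_n) : bool :=
  [forall i : 'I_n, forall j : 'I_n,
     (((j < i)%N ==> (H i j == 0)) && ((i < j)%N ==> ((0 <= H i j) && (H i j < H j j)))) ]
  && [forall j : 'I_n, 0 < H j j].

Definition hermite_basis_of (n : nat) (H : 'M[int]_n) (L : 'rV[int]_n -> Prop) : Prop :=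
  hermite_form H /\ (forall v, lattice H v <-> L v).

Definition hermite_basis_mx (r c : nat) (H : 'M[int]_c) (B : 'M[int]_(r, c)) : Prop :=
  hermite_basis_of H (lattice B).

(* Main.v *)
Require Import Defs.
From mathcomp Require Import all_boot all_order all_algebra.
From mathcomp Require Import zify.
Import GRing.Theory Num.Theory.
Local Open Scope ring_scope.

Lemma herm_facts (n : nat) (H : 'M[int]_n) : hermite_form H ->
  (forall i j : 'I_n, (j < i)%N -> H i j = 0) /\
  (forall i j : 'I_n, (i < j)%N -> 0 <= H i j /\ H i j < H j j) /\
  (forall j, 0 < H j j).
Proof.
move/andP=> [/forallP hA /forallP hD]; split; [|split].
- move=> i j ji; move/forallP: (hA i) => /(_ j) /andP [/implyP h _].
  by apply/eqP; apply: h.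
- move=> i j ij; move/forallP: (hA i) => /(_ j) /andP [_ /implyP h].
  by move/andP: (h ij).
- exact: hD.
Qed.

Lemma mul_inj_det (p q : nat) (w : 'M[int]_(p, q)) (M : 'M[int]_q) :
  \det M != 0 -> w *m M = 0 -> w = 0.
Proof.
move=> dM wM.
have : w *m M *m \adj M = 0 by rewrite wM mul0mx.
rewrite -mulmxA mul_mx_adj mul_mx_scalar => /eqP.
by rewrite scalemx_eq0 (negbTE dM) /= => /eqP.
Qed.

Lemma zmod_rearr (V : zmodType) (p q r t : V) :
  p + (q - r + t) = p + q + (t - r).
Proof. by rewrite -!addrA; congr (_ + _); rewrite addrC -addrA [t + _]addrC addrA addrC. Qed.

Theorem mainTheorem12 (m n1 n2 : nat)
  (S : 'M[int]_m) (F : 'M[int]_(n1 + n2, m))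
  (H : 'M[int]_(n1 + n2)) (T : 'M[int]_m) :
  \det S != 0 ->
  hermite_basis_of H (relations S F) ->
  hermite_basis_mx T (col_mx S (dsubmx F)) ->
  let H1 : 'M[int]_(n1 + n2) := block_mx (ulsubmx H) 0 0 1%:M in
  let H2 : 'M[int]_(n1 + n2) := block_mx 1%:M (ursubmx H) 0 (drsubmx H) in
  hermite_basis_of H2 (relations S (H1 *m F)) /\
  hermite_basis_mx T (col_mx S (H1 *m F)).
Proof.
move=> _ [hH hL] [hT hTL] H1 H2.
have [hA [hU hD]] := @herm_facts _ _ hH.
have dl0 : dlsubmx H = 0.
  apply/matrixP => i j; rewrite !mxE; apply: hA => /=; have := ltn_ord j; lia.
have HE : H = H2 *m H1.
  rewrite /H2 /H1 mulmx_block !mul1mx !mul0mx !mulmx0 !mulmx1 !addr0 !add0r.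
  by rewrite -dl0 submxK.
have [X HX] : exists X : 'M[int]_(n1 + n2, m), H *m F = X *m S.
  have : forall i, exists x : 'rV[int]_m, row i H *m F = x *m S.
    move=> i; have := (hL (row i H)).1; apply.
    by exists (delta_mx 0 i); rewrite -rowE.
  case/fin_all_exists => f hf; exists (\matrix_i f i).
  by apply/row_matrixP => i; rewrite !row_mul rowK -hf.
have H1F : H1 *m F = col_mx (ulsubmx H *m usubmx F) (dsubmx F).
  by rewrite /H1 -[in LHS](vsubmxK F) mul_block_col !mul0mx mul1mx addr0 add0r.
have UF : ulsubmx H *m usubmx F = usubmx X *m S - ursubmx H *m dsubmx F.
  have : usubmx (H *m F) = usubmx (X *m S) by rewrite HX.
  rewrite -!mul_usub_mx -[usubmx H]hsubmxK -[in X in row_mx _ _ *m X = _](vsubmxK F).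
  by rewrite mul_row_col => e; rewrite -e addrK.
split; last first.
  split => // v; rewrite hTL; split.
  - case=> x ->; rewrite -(hsubmxK x) mul_row_col H1F.
    exists (row_mx (lsubmx x) (row_mx 0 (rsubmx x))).
    by rewrite !mul_row_col mul0mx add0r.
  - case=> x ->; rewrite -(hsubmxK x) mul_row_col H1F.
    rewrite -(hsubmxK (rsubmx x)) mul_row_col UF.
    set a := lsubmx (rsubmx x); set b := rsubmx (rsubmx x).
    exists (row_mx (lsubmx x + a *m usubmx X) (b - a *m ursubmx H)).
    rewrite mul_row_col mulmxDl mulmxBl mulmxBr !mulmxA.
    by rewrite zmod_rearr.
split.
  apply/andP; split.
    apply/forallP=> i; apply/forallP=> j.
    rewrite -(splitK i) -(splitK j); case: (split i) => i'; case: (split j) => j' /=.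
    all: rewrite ?block_mxEul ?block_mxEur ?block_mxEdl ?block_mxEdr ?mxE.
    - apply/andP; split; apply/implyP => h;
        (have ne : (i' == j') = false by apply/eqP => e; move: h; rewrite e ltnn);
        by rewrite ne ?eqxx.
    - apply/andP; split; apply/implyP => h.
        by exfalso; have := ltn_ord i'; lia.
      by have [h1 h2] := hU (lshift n2 i') (rshift n1 j') h; rewrite h1 h2.
    - apply/andP; split; apply/implyP => h //.
      by exfalso; have := ltn_ord j'; lia.
    - apply/andP; split; apply/implyP => h.
        by apply/eqP; apply: hA.
      by have [h1 h2] := hU (rshift n1 i') (rshift n1 j') h; rewrite h1 h2.
  apply/forallP => j; rewrite -(splitK j); case: (split j) => j' /=.
    by rewrite block_mxEul mxE eqxx.
  by rewrite block_mxEdr !mxE; exact: (hD (rshift n1 j')).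
move=> v; rewrite /relations mulmxA -[lattice S _]/(relations S F (v *m H1)) -hL.
have dH1 : \det H1 != 0.
  rewrite /H1 det_ublock det1 mulr1 -det_tr det_trig.
    by apply: lt0r_neq0; apply: prodr_gt0 => i _; rewrite !mxE; apply: hD.
  apply/is_trig_mxP => i j ij; rewrite !mxE; apply: hA => /=; done.
split.
  by case=> x ->; exists x; rewrite HE mulmxA.
case=> x e; exists x; apply/eqP; rewrite -subr_eq0; apply/eqP.
by apply: (@mul_inj_det _ _ _ H1) => //; rewrite mulmxBl e HE mulmxA subrr.
Qed.
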